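(* Let $m,\ell\in\mathbb N$. There exist $L_2(m,\ell)\in\mathbb N$ and $K_2(m,\ell)\in\mathbb N$ such that the following holds: if $\varepsilon_1,\dots,\varepsilon_m\in\{\pm1\}$ and $i_1,\dots,i_m\ge K_2(m,\ell)$ are integers with $\mathrm{gap}(i_1,\dots,i_m)\le\ell$, then $$\varepsilon_1a_{i_1}+\dots+\varepsilon_ma_{i_m}=0\quad\text{implies}\quad\varepsilon_1\eta^{i_1}+\dots+\varepsilon_m\eta^{i_m}=0,$$ and if $\varepsilon_1a_{i_1}+\dots+\varepsilon_ma_{i_m}\ne0$, then $$|\varepsilon_1a_{i_1}+\dots+\varepsilon_ma_{i_m}|\ge\eta^{\min\{i_1,\dots,i_m\}-L_2(m,\ell)}.$$
   Context: Standing setting: $d\in\mathbb N$; $\lambda_1,\dots,\lambda_d\in\mathbb C$ are the roots of an irreducible polynomial of degree $d$ with integer coefficients; $c_1,\dots,c_d\in\mathbb C$; the dominant root condition holds: $\lambda_1$ is real, $\lambda_1>1$, $\lambda_1>\max\{|\lambda_2|,\dots,|\lambda_d|\}$, $c_1\ne0$; $a_n=c_1\lambda_1^n+\dots+c_d\lambda_d^n$ is a positive integer for every $n\in\mathbb N$; and $\eta:=\lambda_1$. For integers $i_1,\dots,i_m$, let $i_{(1)}\le\dots\le i_{(m)}$ be the same numbers sorted nondecreasingly, and $\mathrm{gap}(i_1,\dots,i_m)=\max\{i_{(2)}-i_{(1)},\dots,i_{(m)}-i_{(m-1)}\}$ (taken to be $0$ if $m=1$). *)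

(* Defs.v *)
From HB Require Import structures.
From mathcomp Require Import all_boot all_order all_algebra.
From mathcomp Require Import complex.
From mathcomp Require Import reals.
Set Implicit Arguments. Unset Strict Implicit. Unset Printing Implicit Defensive.
Import Order.TTheory GRing.Theory Num.Theory.

Definition gap (s : seq nat) : nat :=
  let t := sort leq s in
  \max_(k < (size t).-1) (nth 0 t k.+1 - nth 0 t k).

(* min{i_1,...,i_m} (only used for m >= 1; value 0 for the empty sequence). *)
Definition seqmin (s : seq nat) : nat := head 0%N (sort leq s).

Local Open Scope ring_scope.

(* The linear recurrence sequence a_n = c_1 lambda_1^n + ... + c_d lambda_d^n,
   with indices shifted to 0..d-1 (lambda 0 = lambda_1 = eta). *)
Definition lrs (R : rcfType) (d : nat) (c lam : 'I_d -> R[i]) (n : nat) : R[i] :=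
  \sum_(j < d) c j * lam j ^+ n.

(* Main.v *)
Require Import Defs.
From HB Require Import structures.
From mathcomp Require Import all_boot all_order all_algebra.
From mathcomp Require Import complex.
From mathcomp Require Import reals.
From mathcomp Require Import lra zify ring.
Import Order.TTheory GRing.Theory Num.Theory.
Local Open Scope ring_scope.

Lemma gap_bound (m l : nat) (idx : 'I_m -> nat) :
  (gap [seq idx j | j <- enum 'I_m] <= l)%N ->
  forall j, (seqmin [seq idx j | j <- enum 'I_m] <= idx j)%N /\
            (idx j <= seqmin [seq idx j | j <- enum 'I_m] + m * l)%N.
Proof.
set s := [seq idx j | j <- enum 'I_m].
rewrite /gap /seqmin /=.
set t := sort leq s => Hg j.
have st : sorted leq t by apply: sort_sorted; exact: leq_total.
have szt : size t = m by rewrite size_sort size_map size_enum_ord.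
have cons k : (k.+1 < size t)%N -> (nth 0 t k.+1 <= nth 0 t k + l)%N.
  move=> hk.
  have hk' : (k < (size t).-1)%N by rewrite -ltnS prednK //; case: (size t) hk.
  have := leq_trans (leq_bigmax (Ordinal hk')) Hg.
  rewrite /=; lia.
have bnd k : (k < size t)%N -> (nth 0 t k <= nth 0 t 0 + k * l)%N.
  elim: k => [|k IH] hk; first by rewrite mul0n addn0.
  have := cons k hk; have := IH (ltnW hk); lia.
have xt : idx j \in t by rewrite mem_sort; apply: map_f; exact: mem_enum.
have hi : (index (idx j) t < size t)%N by rewrite index_mem.
split.
  clear Hg; case: t st xt {szt cons bnd hi} => [|h t'] //= st.
  rewrite inE => /orP [/eqP -> //|xt'].
  by have /allP := order_path_min leq_trans st; apply.
have := bnd _ hi; rewrite nth_index //.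
have : (index (idx j) t * l <= m * l)%N by rewrite leq_mul2r -szt (ltnW hi) orbT.
clear Hg; case: t st xt hi {cons bnd szt} => [|h t'] //= _ _ _.
lia.
Qed.

Lemma seqmin_mem (m : nat) (idx : 'I_m -> nat) : (0 < m)%N ->
  exists j0, seqmin [seq idx j | j <- enum 'I_m] = idx j0.
Proof.
move=> m0; rewrite /seqmin.
have : size (sort leq [seq idx j | j <- enum 'I_m]) = m
  by rewrite size_sort size_map size_enum_ord.
have : forall x, x \in sort leq [seq idx j | j <- enum 'I_m] -> exists j0, x = idx j0.
  move=> x; rewrite mem_sort => /mapP [j _ ->]; by exists j.
case: (sort _ _) => [|h t] hm /=; first by move=> sz; rewrite -sz in m0.
move=> _; apply: hm; exact: mem_head.
Qed.

Lemma arith (F : numDomainType) (a u v w : F) :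
  a <= u -> 2%:R * v <= a -> u - v <= w -> a <= 2%:R * w.
Proof.
move=> au va uw.
have h1 : 2%:R * (u - v) <= 2%:R * w by rewrite ler_wpM2l.
apply: le_trans h1.
have -> : 2%:R * (u - v) = 2%:R * u - 2%:R * v by rewrite mulrBr.
have h2 : 2%:R * a <= 2%:R * u by rewrite ler_wpM2l.
have := lerB h2 va.
by rewrite mulr2n mulrDl mul1r addrK.
Qed.


Lemma bern (R : realType) (q : R) n : 1 <= q -> 1 + n%:R * (q - 1) <= q ^+ n.
Proof.
move=> q1; elim: n => [|n IH]; first by rewrite mul0r addr0 expr0.
rewrite exprS -natr1.
have h : 0 <= (n%:R : R) by rewrite ler0n.
have h2 : 0 <= n%:R * ((q - 1) * (q - 1)) by rewrite mulr_ge0 // mulr_ge0 // subr_ge0.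
have h3 : q * (1 + n%:R * (q - 1)) <= q * q ^+ n by rewrite ler_wpM2l // (le_trans _ q1).
lra.
Qed.

Lemma L1 (R : realType) (q y : R) : 1 < q -> exists n, y <= q ^+ n.
Proof.
move=> q1; exists (Num.bound (`|y| / (q - 1))).
have hq : 0 < q - 1 by lra.
have := @archi_boundP _ (`|y| / (q - 1)) (divr_ge0 (normr_ge0 _) (ltW hq)).
set n := Num.bound _ => hn.
have := @bern _ q n (ltW q1).
rewrite ltr_pdivrMr // in hn.
have := ler_norm y.
lra.
Qed.

Lemma L2 (R : realType) (y A t e : R) : 0 <= y -> 0 < A -> 0 <= t -> t < e ->
  exists K, forall n, (K <= n)%N -> y * t ^+ n <= A * e ^+ n.
Proof.
move=> y0 A0 t0 te.
have e0 : 0 < e by lra.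
have [->|tn0] := eqVneq t 0.
  exists 1%N => n n1; rewrite expr0n; case: n n1 => // n _ /=.
  by rewrite mulr0 mulr_ge0 ?exprn_ge0 ?ltW.
have tp : 0 < t by rewrite lt_def tn0.
have q1 : 1 < e / t by rewrite ltr_pdivlMr // mul1r.
have [K hK] := @L1 _ _ (y / A) q1.
exists K => n Kn.
have h : (e / t) ^+ K <= (e / t) ^+ n by rewrite (ler_eXn2l q1).
have := le_trans hK h.
rewrite expr_div_n ler_pdivlMr ?exprn_gt0 // mulrAC ler_pdivrMr //.
by rewrite [A * _]mulrC.
Qed.

Lemma minpos (R : realType) (s : seq R) :
  exists d : R, 0 < d /\ forall x, x \in s -> x != 0 -> d <= `|x|.
Proof.
elim: s => [|x s [d [d0 hd]]]; first by exists 1; split => //.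
have [->|xn0] := eqVneq x 0.
  exists d; split => // z; rewrite inE => /orP [/eqP -> | ]; first by rewrite eqxx.
  exact: hd.
exists (Num.min d `|x|); split; first by rewrite lt_min d0 normr_gt0.
move=> z; rewrite inE => /orP [/eqP -> | zs zn0]; first by rewrite ge_min lexx orbT.
by rewrite ge_min hd.
Qed.
Local Open Scope complex_scope.
Local Open Scope ring_scope.

Lemma CL1 (R : realType) (q y : R[i]) : q \is Num.real -> y \is Num.real -> 1 < q ->
  exists n, y <= q ^+ n.
Proof.
move=> /complex_realP [q' ->] /complex_realP [y' ->].
rewrite ltcR => /(@L1 _ _ y') [n hn]; exists n.
by rewrite -rmorphXn lecR.
Qed.

Lemma CL2 (R : realType) (y A t e : R[i]) : y \is Num.real -> A \is Num.real ->
  t \is Num.real -> e \is Num.real ->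
  0 <= y -> 0 < A -> 0 <= t -> t < e ->
  exists K, forall n, (K <= n)%N -> y * t ^+ n <= A * e ^+ n.
Proof.
move=> /complex_realP [y' ->] /complex_realP [A' ->] /complex_realP [t' ->]
  /complex_realP [e' ->].
rewrite ler0c ltcR ler0c ltcR => y0 A0 t0 te.
have [K hK] := @L2 _ _ _ _ _ y0 A0 t0 te; exists K => n /hK.
by rewrite -!rmorphXn -!rmorphM lecR.
Qed.

Lemma Cminpos (R : realType) (T : finType) (f : T -> R[i]) :
  exists d : R[i], 0 < d /\ forall x, f x != 0 -> d <= `|f x|.
Proof.
have [d [d0 hd]] := @minpos _ [seq complex.Re `|f x| | x <- enum T].
exists d%:C; split; first by rewrite ltcR.
move=> x fx0.
have hr : (complex.Re `|f x|)%:C = `|f x| by apply: RRe_real; exact: normr_real.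
have hge : 0 <= complex.Re `|f x| by rewrite -ler0c hr.
rewrite -hr lecR.
have hx := hd (complex.Re `|f x|) (map_f _ (mem_enum _ x)).
rewrite -(ger0_norm hge); apply: hx.
apply/eqP => h0; move: fx0; rewrite -normr_eq0 -hr h0.
by rewrite eqxx.
Qed.

Lemma root_lam (R : realType) (d : nat) (lam : 'I_d.+1 -> R[i]) (p : {poly int})
  (Hroots : map_poly (intr : int -> R[i]) p
            = (lead_coef p)%:~R *: \prod_(j < d.+1) ('X - (lam j)%:P)) j :
  (map_poly (intr : int -> R[i]) p).[lam j] = 0.
Proof.
rewrite Hroots hornerZ horner_prod (bigD1 j) //= hornerXsubC subrr mul0r.
by rewrite mulr0.
Qed.

Lemma galois (R : realType) (d : nat) (lam : 'I_d.+1 -> R[i]) (p : {poly int})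
  (Hirr : irreducible_poly (map_poly (intr : int -> rat) p))
  (Hroots : map_poly (intr : int -> R[i]) p
            = (lead_coef p)%:~R *: \prod_(j < d.+1) ('X - (lam j)%:P))
  (Q : {poly rat}) :
  (map_poly (ratr : rat -> R[i]) Q).[lam ord0] = 0 ->
  forall j, (map_poly (ratr : rat -> R[i]) Q).[lam j] = 0.
Proof.
move=> HQ j.
set P := map_poly (intr : int -> rat) p.
have mP : map_poly (ratr : rat -> R[i]) P = map_poly (intr : int -> R[i]) p.
  rewrite /P -map_poly_comp; apply: eq_map_poly => z /=; exact: rmorph_int.
have rP k : (map_poly (ratr : rat -> R[i]) P).[lam k] = 0.
  by rewrite mP; exact: root_lam.
set g := gcdp P Q.
have rg : root (map_poly (ratr : rat -> R[i]) g) (lam ord0).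
  by rewrite /g gcdp_map root_gcd; apply/andP; split; apply/eqP.
have sg : size g != 1%N.
  rewrite -(size_map_poly (ratr : {rmorphism rat -> R[i]})).
  apply/eqP => s1.
  have nz : map_poly (ratr : rat -> R[i]) g != 0 by rewrite -size_poly_eq0 s1.
  by have := root_size_gt1 nz rg; rewrite s1.
have gP : g %= P := Hirr.2 g sg (dvdp_gcdl P Q).
have PQ : P %| Q.
  apply: dvdp_trans (dvdp_gcdr P Q).
  by rewrite (eqp_dvdr _ gP) dvdpp.
rewrite -(divpK PQ) rmorphM /= hornerM rP mulr0.
done.
Qed.

Theorem lemma6p3 (R : realType) (d : nat) (lam c : 'I_d.+1 -> R[i])
  (p : {poly int})
  (Hdeg : size p = d.+2)
  (Hirr : irreducible_poly (map_poly (intr : int -> rat) p))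
  (Hroots : map_poly (intr : int -> R[i]) p
            = (lead_coef p)%:~R *: \prod_(j < d.+1) ('X - (lam j)%:P))
  (Hreal : lam ord0 \is Num.real)
  (Hgt1 : 1 < lam ord0)
  (Hdom : forall j : 'I_d.+1, j != ord0 -> `|lam j| < lam ord0)
  (Hc : c ord0 != 0)
  (Hpos : forall n : nat, (0 < n)%N ->
            exists k : nat, (0 < k)%N /\ lrs c lam n = k%:R)
  (m l : nat) :
  exists L2 K2 : nat,
    forall (eps : 'I_m -> int) (idx : 'I_m -> nat),
      (forall j, eps j = 1 \/ eps j = -1) ->
      (forall j, (K2 <= idx j)%N) ->
      (gap [seq idx j | j <- enum 'I_m] <= l)%N ->
      let S := \sum_(j < m) (eps j)%:~R * lrs c lam (idx j) in
      (S = 0 -> \sum_(j < m) (eps j)%:~R * lam ord0 ^+ idx j = 0) /\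
      (S != 0 ->
         lam ord0 ^ ((seqmin [seq idx j | j <- enum 'I_m])%:Z - L2%:Z) <= `|S|).
Proof.
set eta := lam ord0.
have eta_r : eta \is Num.real := Hreal.
have eta0 : 0 < eta by apply: lt_trans Hgt1; exact: ltr01.
have eta_nz : eta != 0 by rewrite gt_eqF.
set D := (m * l)%N.
pose PX (x : {ffun 'I_m -> bool * 'I_D.+1}) : R[i] :=
  \sum_(k < m) (if (x k).1 then 1 else -1) * eta ^+ (x k).2.
have [dl [dl0 hdl]] := @Cminpos R _ PX.
set A := `|c ord0| * dl.
have A0 : 0 < A by rewrite mulr_gt0 // normr_gt0.
have A_r : A \is Num.real := gtr0_real A0.
have [L2 hL2] : exists L2, 2%:R <= A * eta ^+ L2.
  have yr : A^-1 * 2%:R \is Num.real by rewrite rpredM ?rpredV ?rpred_nat.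
  have [n hn] := @CL1 R _ _ eta_r yr Hgt1.
  by exists n; rewrite -ler_pdivrMl.
pose M j := (1 + `|lam j|) ^+ D.
pose y j := (2 * d.+1)%:R * (`|c j| * (m%:R * M j)).
have hKj : forall j : 'I_d.+1, exists K : nat, j != ord0 ->
    forall n, (K <= n)%N -> y j * `|lam j| ^+ n <= A * eta ^+ n.
  move=> j; have [->|hj] := eqVneq j ord0; first by exists 0%N.
  have M0 : 0 <= M j by rewrite exprn_ge0 // addr_ge0 ?ler01 ?normr_ge0.
  have y0 : 0 <= y j by rewrite mulr_ge0 ?ler0n // mulr_ge0 ?normr_ge0 // mulr_ge0 ?ler0n.
  have [K hK] := @CL2 R _ _ _ _ (ger0_real y0) A_r (normr_real (lam j)) eta_r y0 A0 (normr_ge0 _) (Hdom j hj).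
  by exists K.
have [Kf hKf] := fin_all_exists hKj.
exists L2, (\max_j Kf j)%N.
move=> eps idx Heps HK Hgap S.
have [m0|mpos] := posnP m.
  have S0 : S = 0 by rewrite /S big1 // => -[k hk]; exfalso; move: (hk); rewrite m0.
  split => [_|]; last by rewrite S0 eqxx.
  by rewrite big1 // => -[k hk]; exfalso; move: (hk); rewrite m0.
set i0 := seqmin [seq idx j | j <- enum 'I_m].
have gb := @gap_bound m l idx Hgap.
pose e k := (idx k - i0)%N.
have he k : idx k = (i0 + e k)%N by have := gb k; rewrite /e; lia.
have heD k : (e k <= D)%N by have := gb k; rewrite /e /D; lia.
have [j0 hj0] := @seqmin_mem m idx mpos.
have K2i0 j : (Kf j <= i0)%N.
  by rewrite /i0 hj0; apply: leq_trans (HK j0); exact: (leq_bigmax j).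
pose P j := \sum_(k < m) (eps k)%:~R * lam j ^+ e k.
have HS : S = \sum_j c j * lam j ^+ i0 * P j.
  rewrite /S /lrs.
  under eq_bigr do rewrite mulr_sumr.
  rewrite exchange_big /=; apply: eq_bigr => j _.
  rewrite /P mulr_sumr; apply: eq_bigr => k _.
  rewrite (he k) exprD; ring.
have HE : \sum_(k < m) (eps k)%:~R * eta ^+ idx k = eta ^+ i0 * P ord0.
  rewrite /P mulr_sumr; apply: eq_bigr => k _; rewrite (he k) exprD; ring.
have [P00|P0n] := eqVneq (P ord0) 0.
  pose Q : {poly rat} := \sum_(k < m) (eps k)%:~R *: 'X^(e k).
  have hQ z : (map_poly (ratr : rat -> R[i]) Q).[z] = \sum_(k < m) (eps k)%:~R * z ^+ e k.
    rewrite raddf_sum horner_sum; apply: eq_bigr => k _.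
    by rewrite /= map_polyZ map_polyXn hornerZ hornerXn rmorph_int.
  have Pz j : P j = 0.
    rewrite /P -hQ; apply: (@galois R d lam p Hirr Hroots); rewrite hQ; exact: P00.
  have S0 : S = 0 by rewrite HS big1 // => j _; rewrite Pz mulr0.
  split => [_|]; first by rewrite HE P00 mulr0.
  by rewrite S0 eqxx.
pose x : {ffun 'I_m -> bool * 'I_D.+1} := [ffun k => (eps k == 1, inord (e k))].
have PXx : PX x = P ord0.
  rewrite /PX /P; apply: eq_bigr => k _; rewrite ffunE /= inordK ?ltnS ?heD //.
  by case: (Heps k) => ->.
have hP0 : dl <= `|P ord0| by rewrite -PXx; apply: hdl; rewrite PXx.
set a := A * eta ^+ i0.
have a0 : 0 < a by rewrite mulr_gt0 // exprn_gt0.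
have key : a <= 2%:R * `|S|.
  rewrite HS (bigD1 ord0) //=.
  set X0 := c ord0 * eta ^+ i0 * P ord0.
  set Rest := \sum_(j < d.+1 | j != ord0) _.
  apply: (@arith _ a `|X0| `|Rest| `|X0 + Rest|); [ | | exact: lerB_normD].
    rewrite /X0 !normrM normrX (ger0_norm (ltW eta0)) /a /A.
    rewrite [_ * eta ^+ i0 * _]mulrAC ler_pM2r ?exprn_gt0 //.
    by rewrite ler_pM2l ?normr_gt0.

  pose Tm j := `|c j| * `|lam j| ^+ i0 * (m%:R * M j).
  have hR : `|Rest| <= \sum_(j < d.+1 | j != ord0) Tm j.
    apply: le_trans (ler_norm_sum _ _ _) _; apply: ler_sum => j _.
    rewrite !normrM normrX /Tm ler_wpM2l ?mulr_ge0 ?normr_ge0 ?exprn_ge0 //.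
    rewrite /P; apply: le_trans (ler_norm_sum _ _ _) _.
    apply: le_trans (_ : _ <= \sum_(k < m) M j) _; last first.
      by rewrite sumr_const card_ord mulr_natl.
    apply: ler_sum => k _; rewrite normrM normrX.
    have -> : `|(eps k)%:~R : R[i]| = 1 by case: (Heps k) => ->; rewrite ?normrN normr1.
    rewrite mul1r.
    apply: le_trans (_ : _ <= (1 + `|lam j|) ^+ e k) _.
      apply: lerXn2r; rewrite ?nnegrE ?normr_ge0 ?addr_ge0 ?ler01 //.
      by rewrite lerDr ler01.
    by apply: ler_weXn2l; [rewrite lerDl normr_ge0 | exact: heD].
  have hT : (2 * d.+1)%:R * \sum_(j < d.+1 | j != ord0) Tm j <= d.+1%:R * a.
    rewrite mulr_sumr.
    apply: le_trans (_ : _ <= \sum_(j < d.+1 | j != ord0) a) _.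
      apply: ler_sum => j hj.
      have -> : (2 * d.+1)%:R * Tm j = y j * `|lam j| ^+ i0 by rewrite /y /Tm; ring.
      exact: (hKf j hj i0 (K2i0 j)).
    apply: le_trans (_ : _ <= \sum_(j < d.+1) a) _.
      by rewrite [X in _ <= X](bigD1 ord0) //= lerDr ltW.
    by rewrite sumr_const card_ord mulr_natl.
  have h2 : 2%:R * \sum_(j < d.+1 | j != ord0) Tm j <= a.
    rewrite -(ler_pM2l (ltr0Sn _ d)) mulrA -natrM mulnC.
    exact: hT.
  apply: le_trans h2; by rewrite ler_wpM2l ?ler0n.
split.
  move=> S0; exfalso; move: key; rewrite S0 normr0 mulr0 => key.
  by have := lt_le_trans a0 key; rewrite ltxx.
move=> _.
set z := eta ^ (i0%:Z - L2%:Z).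
have z0 : 0 <= z by rewrite exprz_ge0 // ltW.
have hz : z * (A * eta ^+ L2) = a.
  rewrite /a mulrCA; congr (A * _).
  have -> : eta ^+ L2 = eta ^ (L2%:Z) by [].
  by rewrite /z -expfzDr // subrK.
rewrite -(ler_pM2l (ltr0Sn _ 1%N)).
apply: le_trans key.
by rewrite -hz mulrC ler_wpM2l.
Qed.
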